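(* For all integers $i,j\ge1$ there exist complex numbers $W^{i,j}_k$ ($0\le k\le i+j-1$), depending only on $i,j,k,\beta,\delta$, with $W^{i,i}_k=0$, such that whenever $A,B,C$ in a unital associative algebra over $\mathbb C$ satisfy $[A,B]=C$ and $[A,C]=\sum_{m=1}^{L+1}\alpha_mA^m+\delta B+\epsilon+\beta\{A,B\}$ (for some $L\ge0$ and constants $\alpha_m,\epsilon$), one has $$A^iBA^j-A^jBA^i=\sum_{k=0}^{i+j-1}W^{i,j}_k\{A^k,C\}.$$
   Context: $[X,Y]=XY-YX$, $\{X,Y\}=XY+YX$, $A^0=1$. *)

(* Defs.v *)
From HB Require Import structures.
From mathcomp Require Import all_boot all_order all_algebra.
Set Implicit Arguments. Unset Strict Implicit. Unset Printing Implicit Defensive.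
Import Order.TTheory GRing.Theory Num.Theory.
Local Open Scope ring_scope.

Definition comm (V : pzRingType) (X Y : V) : V := X * Y - Y * X.
Definition acomm (V : pzRingType) (X Y : V) : V := X * Y + Y * X.

(* Main.v *)
Require Import Defs.
From HB Require Import structures.
From mathcomp Require Import all_boot all_order all_algebra zify.
Import Order.TTheory GRing.Theory Num.Theory.
Local Open Scope ring_scope.
Set Implicit Arguments. Unset Strict Implicit.

Lemma commXB (V : pzRingType) (A B : V) n :
  A ^+ n.+1 * B - B * A ^+ n.+1 =
  \sum_(0 <= t < n.+1) A ^+ t * comm A B * A ^+ (n - t).
Proof.
elim: n => [|n IH].
  by rewrite big_nat1 /= !expr1 expr0 mul1r mulr1.
rewrite big_nat_recl // expr0 mul1r subn0.
have -> : \sum_(0 <= i < n.+1) A ^+ i.+1 * comm A B * A ^+ (n.+1 - i.+1)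
   = A * \sum_(0 <= t < n.+1) A ^+ t * comm A B * A ^+ (n - t).
  rewrite mulr_sumr; apply: eq_bigr => i _; by rewrite subSS exprS !mulrA.
rewrite -IH /comm [A ^+ n.+2]exprS.
rewrite mulrBl mulrBr !mulrA.
by rewrite [RHS]addrC addrA subrK.
Qed.

Lemma Dsum (V : pzRingType) (A B : V) b n :
  A ^+ (b + n.+1) * B * A ^+ b - A ^+ b * B * A ^+ (b + n.+1) =
  \sum_(0 <= t < n.+1) A ^+ (b + t) * comm A B * A ^+ (b + (n - t)).
Proof.
have -> : A ^+ (b + n.+1) * B * A ^+ b - A ^+ b * B * A ^+ (b + n.+1)
  = A ^+ b * (A ^+ n.+1 * B - B * A ^+ n.+1) * A ^+ b.
  by rewrite [in X in _ - X]addnC !exprD mulrBr mulrBl !mulrA.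
rewrite commXB mulr_sumr mulr_suml; apply: eq_bigr => t _.
by rewrite (addnC b (n - t)%N) !exprD !mulrA.
Qed.

Lemma D2 (V : pzRingType) (A B : V) b n :
  (A ^+ (b + n.+1) * B * A ^+ b - A ^+ b * B * A ^+ (b + n.+1)) *+ 2 =
  \sum_(0 <= t < n.+1) (A ^+ (b + t) * comm A B * A ^+ (b + (n - t))
                     + A ^+ (b + (n - t)) * comm A B * A ^+ (b + t)).
Proof.
rewrite big_split /= mulr2n Dsum; congr (_ + _).
rewrite big_nat_rev /=; apply: eq_big_nat => t /andP [_ ht].
rewrite add0n subSS subKn //.
Qed.

Lemma F3 (F : fieldType) (beta delta : F) (V : algType F) (A B C Q : V) p q :
  GRing.comm A Q ->
  comm A C = Q + delta *: B + beta *: acomm A B ->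
  A ^+ p.+1 * C * A ^+ q.+1 + A ^+ q.+1 * C * A ^+ p.+1 =
  (A ^+ p.+2 * C * A ^+ q + A ^+ q * C * A ^+ p.+2)
  - delta *: (A ^+ p.+1 * B * A ^+ q - A ^+ q * B * A ^+ p.+1)
  - beta *: ((A ^+ p.+2 * B * A ^+ q - A ^+ q * B * A ^+ p.+2)
             + (A ^+ p.+1 * B * A ^+ q.+1 - A ^+ q.+1 * B * A ^+ p.+1)).
Proof.
move=> cAQ hR.
set R := comm A C.
have e1 : A ^+ p.+1 * C * A ^+ q.+1 = A ^+ p.+2 * C * A ^+ q - A ^+ p.+1 * R * A ^+ q.
  rewrite [A ^+ q.+1]exprS mulrA -[A ^+ p.+1 * C * A]mulrA.
  have -> : C * A = A * C - R by rewrite /R /comm opprB addrC subrK.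
  by rewrite mulrBr mulrBl !mulrA -exprSr.
have e2 : A ^+ q.+1 * C * A ^+ p.+1 = A ^+ q * C * A ^+ p.+2 + A ^+ q * R * A ^+ p.+1.
  have h : A * C = C * A + R by rewrite /R /comm addrC subrK.
  rewrite [A ^+ q.+1]exprSr -[A ^+ q * A * C]mulrA h mulrDr mulrDl !mulrA.
  by rewrite -[A ^+ q * C * A * A ^+ p.+1]mulrA -exprS.
have fQ : A ^+ q * Q * A ^+ p.+1 = A ^+ p.+1 * Q * A ^+ q.
  have c n : A ^+ n * Q = Q * A ^+ n.
    by have := commrX n (commr_sym cAQ); rewrite /GRing.comm => ->.
  by rewrite c -mulrA -exprD c -mulrA -exprD addnC.
pose f X := A ^+ q * X * A ^+ p.+1 - A ^+ p.+1 * X * A ^+ q.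
have fD X Y : f (X + Y) = f X + f Y.
  by rewrite /f !(mulrDr, mulrDl) opprD addrACA.
have fZ k X : f (k *: X) = k *: f X.
  by rewrite /f -!scalerAr -!scalerAl scalerBr.
have fQ0 : f Q = 0 by rewrite /f fQ subrr.
have fB : f B = - (A ^+ p.+1 * B * A ^+ q - A ^+ q * B * A ^+ p.+1).
  by rewrite /f opprB.
have fAB : f (acomm A B) = - ((A ^+ p.+2 * B * A ^+ q - A ^+ q * B * A ^+ p.+2)
             + (A ^+ p.+1 * B * A ^+ q.+1 - A ^+ q.+1 * B * A ^+ p.+1)).
  have t1 : A ^+ q * (A * B) * A ^+ p.+1 = A ^+ q.+1 * B * A ^+ p.+1
    by rewrite mulrA -exprSr.
  have t2 : A ^+ q * (B * A) * A ^+ p.+1 = A ^+ q * B * A ^+ p.+2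
    by rewrite mulrA -[_ * A * _]mulrA -exprS.
  have t3 : A ^+ p.+1 * (A * B) * A ^+ q = A ^+ p.+2 * B * A ^+ q
    by rewrite mulrA -exprSr.
  have t4 : A ^+ p.+1 * (B * A) * A ^+ q = A ^+ p.+1 * B * A ^+ q.+1
    by rewrite mulrA -[_ * A * _]mulrA -exprS.
  rewrite /f /acomm !(mulrDr, mulrDl) t1 t2 t3 t4.
  by rewrite opprD [RHS]opprD !opprB [A ^+ q.+1 * _ * _ + _]addrC addrACA.
have eR : A ^+ q * R * A ^+ p.+1 - A ^+ p.+1 * R * A ^+ q = f R by [].
rewrite e1 e2 addrACA [- _ + _]addrC eR /R hR !fD !fZ fQ0 fB fAB.
by rewrite add0r !scalerN addrA.
Qed.

Section Main.
Variables (F : numClosedFieldType) (beta delta : F).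

Definition Hyp (V : algType F) (A B C : V) : Prop :=
  exists L (alpha : nat -> F) (eps : F), comm A B = C /\
    comm A C = \sum_(1 <= m < L.+2) alpha m *: A ^+ m + delta *: B
                 + eps%:A + beta *: acomm A B.

Arguments Hyp {V} A B C.

Definition Fam := forall V : algType F, V -> V -> V -> V.

Definition rep (N : nat) (X : Fam) := exists c : nat -> F,
  forall (V : algType F) (A B C : V), Hyp A B C ->
    X V A B C = \sum_(k < N) c k *: acomm (A ^+ k) C.

Lemma rep_ext N (X Y : Fam) :
  (forall (V : algType F) (A B C : V), Hyp A B C -> X V A B C = Y V A B C) ->
  rep N X -> rep N Y.
Proof. by move=> e [c hc]; exists c => V A B C h; rewrite -e // hc. Qed.

Lemma rep_0 N : rep N (fun V A B C => 0).
Proof. by exists (fun _ => 0) => V A B C _; rewrite big1 // => i _; rewrite scale0r. Qed.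

Lemma rep_add N (X Y : Fam) : rep N X -> rep N Y ->
  rep N (fun V A B C => X V A B C + Y V A B C).
Proof.
move=> [c hc] [d hd]; exists (fun k => c k + d k) => V A B C h.
by rewrite hc // hd // -big_split; apply: eq_bigr => i _; rewrite scalerDl.
Qed.

Lemma rep_scale N k (X : Fam) : rep N X ->
  rep N (fun V A B C => k *: X V A B C).
Proof.
move=> [c hc]; exists (fun i => k * c i) => V A B C h.
by rewrite hc // scaler_sumr; apply: eq_bigr => i _; rewrite scalerA.
Qed.

Lemma rep_mono N M (X : Fam) : (N <= M)%N -> rep N X -> rep M X.
Proof.
move=> hNM [c hc]; exists (fun k => if (k < N)%N then c k else 0) => V A B C h.
rewrite hc // (big_ord_widen M (fun k => c k *: acomm (A ^+ k) C)) //.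
by rewrite big_mkcond; apply: eq_bigr => i _; case: ifP => //; rewrite scale0r.
Qed.

Lemma rep_sum N n (X : nat -> Fam) : (forall t, (t < n)%N -> rep N (X t)) ->
  rep N (fun V A B C => \sum_(0 <= t < n) X t V A B C).
Proof.
elim: n => [|n IH] hX.
  apply: rep_ext; last exact: (rep_0 N).
  by move=> V A B C _; rewrite big_geq.
have h1 : rep N (fun V A B C => \sum_(0 <= t < n) X t V A B C).
  by apply: IH => t ht; apply: hX; exact: ltnW.
have h2 := hX n (ltnSn n).
have h3 := rep_add h1 h2.
move: h3; apply: rep_ext.
by move=> V A B C _; rewrite big_nat_recr.
Qed.

Lemma rep_single N M : (N < M)%N -> rep M (fun V A B C => acomm (A ^+ N) C).
Proof.
move=> hNM; exists (fun k => (k == N)%:R) => V A B C _.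
rewrite (bigD1 (Ordinal hNM)) //= eqxx scale1r big1 ?addr0 // => i hi.
have -> : (nat_of_ord i == N) = false.
  apply/negbTE; apply: contra hi => /eqP hiN; apply/eqP; exact: val_inj.
by rewrite scale0r.
Qed.


Lemma hypQ (V : algType F) (A B C : V) : Hyp A B C ->
  comm A B = C /\ exists Q, GRing.comm A Q /\ comm A C = Q + delta *: B + beta *: acomm A B.
Proof.
move=> [L [alpha [eps [hC hR]]]]; split => //.
have cZ (x y : V) k : GRing.comm x y -> GRing.comm x (k *: y).
  by rewrite /GRing.comm -scalerAr -scalerAl => ->.
exists (\sum_(1 <= m < L.+2) alpha m *: A ^+ m + eps%:A); split.
  apply: commrD; last exact: cZ _ _ _ (commr1 A).
  by apply: commr_sum => m _; apply: cZ; apply: commrX; apply: commr_refl.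
by rewrite hR; congr (_ + _); rewrite addrAC.
Qed.

Definition E p q : Fam := fun V A B C => A ^+ p * C * A ^+ q + A ^+ q * C * A ^+ p.
Definition Dd a b : Fam := fun V A B C => A ^+ a * B * A ^+ b - A ^+ b * B * A ^+ a.

Lemma rep_E0 n M : (n < M)%N -> rep M (E n 0).
Proof.
move=> h; apply: rep_ext; last exact: rep_single h.
by move=> V A B C _; rewrite /E /acomm expr0 mulr1 mul1r.
Qed.

Lemma main_ind N : (forall p q, (p + q < N)%N -> rep N (E p q)) /\
                   (forall a b, (a + b <= N)%N -> rep N (Dd a b)).
Proof.
elim: N => [|N [IHE IHD]].
  split => [p q //|a b].
  rewrite leqn0 addn_eq0 => /andP[/eqP-> /eqP->].
  apply: rep_ext; last exact: rep_0.
  by move=> V A B C _; rewrite /Dd subrr.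
have IHD' a b : (a + b <= N)%N -> rep N.+1 (Dd a b).
  by move=> h; apply: rep_mono (IHD a b h).
have Eall : forall q p, (p + q = N)%N -> rep N.+1 (E p q).
  elim=> [|q IHq] p.
    by rewrite addn0 => <-; apply: rep_E0.
  case: p => [|p] hpq.
    apply: rep_ext; last by apply: (@rep_E0 q.+1); lia.
    by move=> V A B C _; rewrite /E addrC.
  have r1 := IHq p.+2 ltac:(lia).
  have r2 := rep_scale (- delta) (IHD' p.+1 q ltac:(lia)).
  have r3 := rep_scale (- beta) (rep_add (IHD' p.+2 q ltac:(lia)) (IHD' p.+1 q.+1 ltac:(lia))).
  apply: rep_ext; last exact: rep_add (rep_add r1 r2) r3.
  move=> V A B C /hypQ [_ [Q [cQ hR]]].
  by rewrite /E /Dd (F3 p q cQ hR) !scaleNr.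
have Epart p q : (p + q < N.+1)%N -> rep N.+1 (E p q).
  move=> h; case: (ltnP (p + q) N) => h'.
    by apply: rep_mono (IHE p q h').
  by apply: Eall; lia.
have Dgt a b : (b < a)%N -> (a + b = N.+1)%N -> rep N.+1 (Dd a b).
  move=> hba hab; have [n en] : exists n, a = (b + n.+1)%N by exists (a - b).-1; lia.
  subst a.
  have rs := rep_sum (X := fun t => E (b + t) (b + (n - t))) (N := N.+1) (n := n.+1).
  have hr : forall t, (t < n.+1)%N -> rep N.+1 (E (b + t) (b + (n - t))).
    by move=> t ht; apply: Epart; lia.
  have rs' := rep_scale (2%:R^-1) (rs hr).
  apply: rep_ext; last exact: rs'.
  move=> V A B C /hypQ [hC _].
  rewrite /= -hC /Dd -D2 -scaler_nat scalerA mulVf ?scale1r //.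
  by rewrite pnatr_eq0.
split=> // a b h.
case: (ltnP (a + b) N.+1) => h'.
  by apply: IHD'.
have hab : (a + b = N.+1)%N by lia.
case: (ltngtP b a) => hba.
- exact: Dgt.
- have hba' : (b + a = N.+1)%N by lia.
  have r := rep_scale (-1) (Dgt b a hba hba').
  apply: rep_ext; last exact: r.
  by move=> V A B C _; rewrite /Dd scaleN1r opprB.
- subst b; apply: rep_ext; last exact: rep_0.
  by move=> V A B C _; rewrite /Dd subrr.
Qed.

End Main.

Unset Implicit Arguments.

Theorem corollary3 (F : numClosedFieldType) (beta delta : F) (i j : nat) :
  (1 <= i)%N -> (1 <= j)%N ->
  exists W : nat -> F,
    (i = j -> forall k, (k < i + j)%N -> W k = 0) /\
    forall (V : algType F) (A B C : V) (L : nat) (alpha : nat -> F) (eps : F),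
      comm A B = C ->
      comm A C = \sum_(1 <= m < L.+2) alpha m *: A ^+ m + delta *: B
                 + eps%:A + beta *: acomm A B ->
      A ^+ i * B * A ^+ j - A ^+ j * B * A ^+ i
        = \sum_(k < i + j) W k *: acomm (A ^+ k) C.
Proof.
move=> _ _.
case: (eqVneq i j) => [<-|hij].
  exists (fun _ => 0); split => // V A B C L alpha eps _ _.
  by rewrite subrr big1 // => k _; rewrite scale0r.
have [_ hD] := main_ind beta delta (i + j).
have [c hc] := hD i j (leqnn _).
exists c; split => [hij' | V A B C L alpha eps hC hR].
  by move: hij; rewrite hij' eqxx.
by apply: (hc V A B C); exists L, alpha, eps.
Qed.
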